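(* Consider a VCG combinatorial auction with a set $G$ of items, $|G|\ge3$, and a set $N$ of agents, $|N|\ge2$, and let $s=(s_1,\dots,s_n)$ be an efficient ex-post equilibrium. Then there exists a type profile $\theta=(\theta_1,\dots,\theta_n)$ and an agent $i\in N$ such that for every pair of bundles $X,Y\in2^G$ with $X\subset Y$ (proper inclusion), $s_i(X,\theta_i)\ne s_i(Y,\theta_i)$.
   Context: Combinatorial auction: items $G$, agents $N$; an outcome assigns pairwise disjoint bundles $o_i\subseteq G$. Types: valuations $v_i(\cdot,\theta_i):2^G\to\mathbb{R}_{\ge0}$ with $v_i(\emptyset,\theta_i)=0$ and monotone under inclusion; utilities quasilinear. VCG mechanism (direct): each agent reports a valuation (a bid $x_i(B)$ for each bundle $B$); an outcome maximizing $\sum_i x_i(o_i)$ is chosen; agent $i$ pays $\max_{o'}\sum_{j\ne i}x_j(o'_j)-\sum_{j\ne i}x_j(o_j)$. A strategy $s_i$ maps agent $i$'s type to a report; $s_i(X,\theta_i)$ denotes the bid of agent $i$ with type $\theta_i$ on bundle $X$. $s$ is an ex-post equilibrium if for every type profile $\theta$ and agent $i$, $s_i(\theta_i)$ is a best response to $s_{-i}(\theta_{-i})$; it is efficient if for every type profile the chosen outcome maximizes total true value. *)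

(* Defs.v *)
From HB Require Import structures.
From mathcomp Require Import all_boot all_order all_algebra.
From mathcomp Require Import reals.
Set Implicit Arguments. Unset Strict Implicit. Unset Printing Implicit Defensive.
Import Order.TTheory GRing.Theory Num.Theory.
Local Open Scope ring_scope.

Section Auction.
Variables (R : realType) (N G : finType).

Definition valuation := {ffun {set G} -> R}.

Definition is_valuation (v : valuation) : Prop :=
  [/\ v set0 = 0, (forall B : {set G}, 0 <= v B) & (forall A B : {set G}, A \subset B -> v A <= v B)].

Definition profile := {ffun N -> valuation}.

Definition valid_profile (x : profile) : Prop := forall i, is_valuation (x i).

Definition outcome := {ffun N -> {set G}}.

Definition feasible (o : outcome) : bool :=
  [forall i, forall j, (i != j) ==> [disjoint o i & o j]].

Definition welfare (x : profile) (o : outcome) : R := \sum_i x i (o i).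

Definition welfare_others (x : profile) (i : N) (o : outcome) : R :=
  \sum_(j | j != i) x j (o j).

(* max over feasible outcomes; 0 is a correct neutral element since bids are
   nonnegative and the empty allocation is feasible with welfare 0. *)
Definition max_welfare_others (x : profile) (i : N) : R :=
  \big[Num.max/0]_(o : outcome | feasible o) welfare_others x i o.

Definition welfare_maximizing (x : profile) (o : outcome) : Prop :=
  feasible o /\ forall o', feasible o' -> welfare x o' <= welfare x o.

(* A VCG allocation rule: on every (admissible) bid profile it selects a
   feasible outcome maximizing reported welfare (arbitrary tie-breaking). *)
Definition vcg_rule (f : profile -> outcome) : Prop :=
  forall x, valid_profile x -> welfare_maximizing x (f x).

Definition vcg_payment (f : profile -> outcome) (x : profile) (i : N) : R :=
  max_welfare_others x i - welfare_others x i (f x).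

Definition vcg_utility (f : profile -> outcome) (v : valuation) (x : profile)
  (i : N) : R := v (f x i) - vcg_payment f x i.

Definition strategy := N -> valuation -> valuation.

Definition valid_strategy (s : strategy) : Prop :=
  forall i v, is_valuation v -> is_valuation (s i v).

Definition play (s : strategy) (th : profile) : profile :=
  [ffun j => s j (th j)].

Definition deviate (x : profile) (i : N) (b : valuation) : profile :=
  [ffun j => if j == i then b else x j].

Definition ex_post_equilibrium (f : profile -> outcome) (s : strategy) : Prop :=
  forall th : profile, valid_profile th -> forall (i : N) (b : valuation),
    is_valuation b ->
    vcg_utility f (th i) (deviate (play s th) i b) i
      <= vcg_utility f (th i) (play s th) i.

Definition efficient_strategy (f : profile -> outcome) (s : strategy) : Prop :=
  forall th : profile, valid_profile th -> welfare_maximizing th (f (play s th)).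

End Auction.

(* Main.v *)
Require Import Defs.
From HB Require Import structures.
From mathcomp Require Import all_boot all_order all_algebra.
From mathcomp Require Import reals.
From mathcomp Require Import zify ring lra.
Import Order.TTheory GRing.Theory Num.Theory.
Local Open Scope ring_scope.

Section Helpers.
Variables (R : realType) (N G : finType).
Set Implicit Arguments.

Lemma welfare_split (x : profile R N G) (o : outcome N G) j :
  welfare x o = x j (o j) + welfare_others x j o.
Proof. by rewrite /welfare (bigD1 j). Qed.

Lemma wo_eval (x : profile R N G) (o : outcome N G) i j : i != j ->
  (forall k, k != i -> k != j -> x k (o k) = 0) ->
  welfare_others x j o = x i (o i).
Proof.
move=> ij h; rewrite /welfare_others (bigD1 i) //= big1 ?addr0 //.
by move=> k /andP[kj ki]; apply: h.
Qed.

Lemma wo_dev (x : profile R N G) j b o :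
  welfare_others (deviate x j b) j o = welfare_others x j o.
Proof.
by apply: eq_bigr => k kj; rewrite ffunE (negbTE kj).
Qed.

Lemma mwo_dev (x : profile R N G) j b :
  max_welfare_others (deviate x j b) j = max_welfare_others x j.
Proof. by apply: eq_bigr => o _; rewrite wo_dev. Qed.

Definition zv : valuation R G := [ffun _ => 0].
Definition vv : valuation R G := [ffun B : {set G} => (#|B|.*2)%:R].
Definition wv (Y : {set G}) : valuation R G :=
  [ffun B : {set G} => (#|B| + (#|B :\: Y|).*2)%:R].

Lemma zv_val : is_valuation zv.
Proof. by split=> [|B|A B _]; rewrite !ffunE. Qed.

Lemma vv_val : is_valuation vv.
Proof.
split=> [|B|A B AB]; rewrite !ffunE ?cards0 ?ler0n //.
by rewrite ler_nat leq_double subset_leq_card.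
Qed.

Lemma wv_val Y : is_valuation (wv Y).
Proof.
split=> [|B|A B AB]; rewrite !ffunE ?set0D ?cards0 ?ler0n //.
rewrite ler_nat leq_add ?subset_leq_card // leq_double subset_leq_card //.
exact: setSD.
Qed.

Lemma feas2 (i j : N) (A B : {set G}) : i != j -> A :&: B = set0 ->
  feasible ([ffun k => if k == i then A else if k == j then B else set0] : outcome N G).
Proof.
move=> ij AB; rewrite /feasible; apply/forallP=> k; apply/forallP=> l; apply/implyP=> kl.
rewrite !ffunE -setI_eq0.
case: (eqVneq k i) => [ki|ki]; case: (eqVneq l i) => [li|li].
- by rewrite ki li eqxx in kl.
- by case: (eqVneq l j) => _; rewrite ?AB ?setI0.
- by case: (eqVneq k j) => _; [rewrite setIC AB | rewrite set0I].
- case: (eqVneq k j) => [kj|kj]; case: (eqVneq l j) => [lj|lj];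
    rewrite ?set0I ?setI0 //.
  by rewrite kj lj eqxx in kl.
Qed.

Lemma count_lemma (Y A B : {set G}) : [disjoint A & B] ->
  vv Y + wv Y (~: Y) <= vv A + wv Y B -> A = Y /\ B = ~: Y.
Proof.
move=> /disjoint_setI0 AB; rewrite !ffunE -natrD -natrD ler_nat.
have e1 := cardsID Y A; have e2 := cardsID Y B.
have e3 : ~: Y :\: Y = ~: Y by apply/setP=> e; rewrite !inE andbb.
rewrite e3 => h.
have hY : (#|A :&: Y| + #|B :&: Y| <= #|Y|)%N.
  have : ((A :&: Y) :|: (B :&: Y)) \subset Y by rewrite subUset !subsetIr.
  move/subset_leq_card; rewrite cardsU.
  have -> : (A :&: Y) :&: (B :&: Y) = set0.
    by rewrite setIACA setIid AB set0I.
  by rewrite cards0 subn0.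
have hC : (#|A :\: Y| + #|B :\: Y| <= #|~: Y|)%N.
  have : ((A :\: Y) :|: (B :\: Y)) \subset ~: Y.
    by rewrite subUset !setDE !subsetIr.
  move/subset_leq_card; rewrite cardsU.
  have -> : (A :\: Y) :&: (B :\: Y) = set0.
    by rewrite !setDE setIACA setIid AB set0I.
  by rewrite cards0 subn0.
have a2 : #|A :\: Y| = 0%N by lia.
have b1 : #|B :&: Y| = 0%N by lia.
have a1 : #|A :&: Y| = #|Y| by lia.
have b2 : #|B :\: Y| = #|~: Y| by lia.
split; apply/eqP; rewrite eqEcard.
  apply/andP; split; last by lia.
  by rewrite -setD_eq0 -cards_eq0 a2.
apply/andP; split; last by lia.
have : B :&: Y == set0 by rewrite -cards_eq0 b1.
by rewrite setI_eq0 disjoints_subset.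
Qed.

Unset Implicit Arguments.
End Helpers.

Theorem proposition6 (R : realType) (N G : finType)
  (f : profile R N G -> outcome N G) (s : strategy R N G) :
  (3 <= #|G|)%N -> (2 <= #|N|)%N ->
  vcg_rule f -> valid_strategy s ->
  ex_post_equilibrium f s -> efficient_strategy f s ->
  exists th : profile R N G, valid_profile th /\
    exists i : N, forall X Y : {set G}, X \proper Y -> s i (th i) X != s i (th i) Y.
Proof.
move=> _ /card_gt1P [i [j [_ _ ij]]] vcg vs heq eff.
pose th0 : profile R N G := [ffun k => if k == i then vv R G else zv R G].
exists th0; split.
  by move=> k; rewrite ffunE; case: ifP => _; [apply: vv_val|apply: zv_val].
exists i => X Y XY; rewrite ffunE eqxx; apply/negP => /eqP Heq.
pose th : profile R N G :=
  [ffun k => if k == i then vv R G else if k == j then wv R Y else zv R G].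
have thv : valid_profile th.
  move=> k; rewrite ffunE; case: ifP => _; first exact: vv_val.
  by case: ifP => _; [apply: wv_val|apply: zv_val].
have thi : th i = vv R G by rewrite ffunE eqxx.
have thj : th j = wv R Y by rewrite ffunE eq_sym (negbTE ij) eqxx.
have thk : forall k, k != i -> k != j -> th k = zv R G.
  by move=> k ki kj; rewrite ffunE (negbTE ki) (negbTE kj).
pose x := play s th.
have xv : valid_profile x by move=> k; rewrite ffunE; apply: vs; apply: thv.
pose o := f x.
have [fo omax] := eff th thv.
pose oY : outcome N G := [ffun k => if k == i then Y else if k == j then ~: Y else set0].
have foY : feasible oY by apply: feas2 ij (setICr Y).
have wth : forall o' : outcome N G, welfare th o' = th i (o' i) + th j (o' j).
  move=> o'; rewrite (welfare_split _ _ i) (@wo_eval _ _ _ _ _ j i) //; first by rewrite eq_sym.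
  by move=> k kj ki; rewrite thk // ffunE.
have oYi : oY i = Y by rewrite ffunE eqxx.
have oYj : oY j = ~: Y by rewrite ffunE eq_sym (negbTE ij) eqxx.
have dij : [disjoint o i & o j].
  move/forallP: fo => /(_ i) /forallP /(_ j) /implyP; exact.
have := omax oY foY; rewrite !wth thi thj oYi oYj.
move/(@count_lemma R _ _ _ _ dij) => [oi oj].
have ok : forall k, k != i -> k != j -> o k = set0.
  move=> k ki kj.
  have d1 : o k :&: o i = set0.
    apply: disjoint_setI0; move/forallP: fo => /(_ k) /forallP /(_ i) /implyP; exact.
  have d2 : o k :&: o j = set0.
    apply: disjoint_setI0; move/forallP: fo => /(_ k) /forallP /(_ j) /implyP; exact.
  apply/setP=> e; rewrite inE; apply/negP => ek.
  case: (boolP (e \in Y)) => eY.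
    have : e \in o k :&: o i by rewrite inE ek oi.
    by rewrite d1 inE.
  have : e \in o k :&: o j by rewrite inE ek oj inE.
  by rewrite d2 inE.
pose x' := deviate x j (wv R Y).
have x'v : valid_profile x'.
  by move=> k; rewrite ffunE; case: ifP => _; [apply: wv_val|apply: xv].
have x'j : x' j = wv R Y by rewrite ffunE eqxx.
pose oX : outcome N G := [ffun k => if k == i then X else if k == j then ~: X else set0].
have foX : feasible oX by apply: feas2 ij (setICr X).
have oXi : oX i = X by rewrite ffunE eqxx.
have oXj : oX j = ~: X by rewrite ffunE eq_sym (negbTE ij) eqxx.
have Hv := (vcg x' x'v).2 oX foX.
rewrite !(welfare_split _ _ j) x'j !wo_dev in Hv.
have Hu := heq th thv j (wv R Y) (wv_val _ _).
rewrite /vcg_utility /vcg_payment -/x -/x' mwo_dev !wo_dev thj -/o in Hu.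
have xi : x i = s i (vv R G) by rewrite /x /play ffunE thi.
have e1 : welfare_others x j oX = x i X.
  rewrite (@wo_eval _ _ _ _ _ i j) ?oXi //.
  move=> k ki kj.
  have -> : oX k = set0 by rewrite ffunE (negbTE ki) (negbTE kj).
  by case: (xv k).
have e2 : welfare_others x j o = x i Y.
  rewrite (@wo_eval _ _ _ _ _ i j) ?oi //.
  move=> k ki kj; rewrite ok //; by case: (xv k).
rewrite e1 xi Heq in Hv; rewrite e2 xi oj in Hu.
have H : wv R Y (~: X) <= wv R Y (~: Y) by rewrite oXj in Hv; lra.
move: H; rewrite !ffunE ler_nat.
have -> : ~: X :\: Y = ~: Y.
  apply/setP=> e; rewrite !inE; case eY: (e \in Y); case eX: (e \in X) => //=.
  by move/proper_sub/subsetP: XY => /(_ e eX); rewrite eY.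
have -> : ~: Y :\: Y = ~: Y by apply/setP=> e; rewrite !inE andbb.
have := proper_card (XY : X \proper Y); rewrite -properC in XY.
have := proper_card XY; lia.
Qed.
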